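(* Consider the Best-or-Worst secretary problem with $n$ candidates and unequal payoffs $0\le m<M$: selecting the overall worst candidate pays $m$, selecting the overall best candidate pays $M$, and any other outcome (including selecting nobody) pays $0$. Then there exist integers $0\le r(n)\le s(n)\le n$ such that the following strategy maximizes the expected payoff among all strategies: reject the first $r(n)$ interviewed candidates; for the interviews $k$ with $r(n)<k\le s(n)$, accept the first candidate which is better than all the preceding ones; after the $s(n)$-th interview, accept the first candidate which is either better than all the preceding ones or worse than all the preceding ones.
   Context: Setting (secretary-type problem): $n$ candidates have distinct qualities (a strict total order) and are interviewed one at a time in uniformly random order (all $n!$ orders equally likely). After the $k$-th interview, the interviewer knows only the relative ranks of the first $k$ candidates among themselves and must immediately and irrevocably either accept the $k$-th candidate (stopping the process) or reject it; rejected candidates cannot be recalled. A strategy is a rule making this decision at each step using only the relative ranks observed so far (it may accept nobody). *)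

(* Defs.v *)
From mathcomp Require Import all_boot all_order all_algebra all_fingroup.
Set Implicit Arguments. Unset Strict Implicit. Unset Printing Implicit Defensive.
Import Order.TTheory GRing.Theory Num.Theory.

(* The interview order is a permutation p : 'S_n; the candidate interviewed at
   step i+1 (0-based position i) has quality p i, where quality n.-1 is the
   overall best and quality 0 the overall worst. *)
Definition qualities n (p : 'S_n) : seq nat := [seq nat_of_ord (p j) | j <- enum 'I_n].

Definition relpat (s : seq nat) : seq nat := [seq count (fun y => y < x) s | x <- s].

(* A (deterministic) strategy: after the k-th interview it sees the relative
   rank pattern of the first k candidates (a seq of size k) and decides
   whether to accept the k-th candidate. *)
Definition strategy := seq nat -> bool.

(* 0-based index of the accepted candidate, or n if nobody is accepted. *)
Definition stop_index n (S : strategy) (p : 'S_n) : nat :=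
  find (fun i => S (relpat (take i.+1 (qualities p)))) (iota 0 n).

Local Open Scope ring_scope.

Definition payoff (R : numDomainType) (m M : R) n (S : strategy) (p : 'S_n) : R :=
  let i := stop_index S p in
  if (i < n)%N then
    let x := nth 0%N (qualities p) i in
    if x == n.-1 then M else if x == 0%N then m else 0
  else 0.

Definition expected_payoff (R : numFieldType) (m M : R) n (S : strategy) : R :=
  (\sum_(p : 'S_n) payoff m M S p) / (n`!)%:R.

Definition threshold_strategy (r s : nat) : strategy := fun pat =>
  let k := size pat in
  let x := last 0%N pat in
  ((r < k <= s)%N && (x == k.-1)) || ((s < k)%N && ((x == k.-1) || (x == 0%N))).

(* Main.v *)
Require Import Defs.
From mathcomp Require Import all_boot all_order all_algebra all_fingroup.
From mathcomp Require Import zify ring lra.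
Import Order.TTheory GRing.Theory Num.Theory.
Set Implicit Arguments. Unset Strict Implicit. Unset Printing Implicit Defensive.


Fixpoint codes (k l : nat) : seq (seq nat) :=
  match l with
  | 0 => [:: [::]]
  | l'.+1 => [seq x :: t | x <- iota 0 k.+1, t <- codes k.+1 l']
  end.

Fixpoint okt (k : nat) (t : seq nat) : bool :=
  match t with [::] => true | c :: t' => (c <= k) && okt k.+1 t' end.

Lemma codesS k l : codes k l.+1 = [seq x :: t | x <- iota 0 k.+1, t <- codes k.+1 l].
Proof. by []. Qed.

Lemma mem_codes l k t : (t \in codes k l) = (size t == l) && okt k t.
Proof.
elim: l k t => [|l IH] k t.
  by case: t => [|c t]; rewrite /= ?in_cons ?in_nil //= andbT.
rewrite codesS; apply/allpairsP/idP.
  move=> [[x y] [Hx Hy ->]].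
  rewrite mem_iota /= in Hx; rewrite IH in Hy.
  by case/andP: Hy => /eqP Hs Ho /=; rewrite Hs eqxx -ltnS Hx.
case: t => [|c t] //=.
case/and3P => /eqP Hs Hc Ho; exists (c, t) => /=; split => //.
  by rewrite -[0 :: _]/(iota 0 k.+1) mem_iota.
by case: Hs => Hs; rewrite IH Hs eqxx.
Qed.

Lemma uniq_codes l k : uniq (codes k l).
Proof.
elim: l k => [|l IH] k //; rewrite codesS.
apply: allpairs_uniq => //; first exact: iota_uniq.
by move=> [a b] [c d] _ _ /= [-> ->].
Qed.

Lemma size_codes l k : size (codes k l) * k`! = (k + l)`!.
Proof.
elim: l k => [|l IH] k; first by rewrite /= mul1n addn0.
rewrite codesS.
rewrite size_allpairs size_iota [k.+1 * _]mulnC -mulnA -factS IH.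
by rewrite addSnnS.
Qed.

Definition ext (pat : seq nat) (c : nat) : seq nat :=
  rcons [seq v + (c <= v) | v <- pat] c.
Definition decode (cs : seq nat) : seq nat := foldl ext [::] cs.

Lemma size_ext pat c : size (ext pat c) = (size pat).+1.
Proof. by rewrite size_rcons size_map. Qed.

Lemma size_foldl_ext pat cs : size (foldl ext pat cs) = size pat + size cs.
Proof. elim: cs pat => [|c cs IH] pat /=; first by rewrite addn0.
by rewrite IH size_ext addSnnS. Qed.

Lemma size_decode cs : size (decode cs) = size cs.
Proof. by rewrite size_foldl_ext. Qed.

Lemma decode_rcons cs c : decode (rcons cs c) = ext (decode cs) c.
Proof. by rewrite /decode foldl_rcons. Qed.

Lemma count_lt_split (s : seq nat) y x : y <= x ->
  count (fun z => z < x) s = count (fun z => z < y) s + count (fun z => (y <= z) && (z < x)) s.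
Proof.
move=> yx; elim: s => [|z s IH] //=; rewrite IH.
case: (ltnP z y) => zy /=.
  by rewrite (leq_trans zy yx) /= addnA.
by rewrite add0n addnCA.
Qed.

Lemma relpat_rcons (s : seq nat) x : x \notin s ->
  relpat (rcons s x) = ext (relpat s) (count (fun z => z < x) s).
Proof.
move=> xs; rewrite /relpat /ext map_rcons; congr rcons.
  rewrite -map_comp; apply/eq_in_map => y ys /=.
  rewrite -cats1 count_cat /= addn0; congr addn.
  have xy : x != y by apply: contraNneq xs => ->.
  case: (ltngtP x y) => H.
  - by apply/esym; rewrite (@count_lt_split s x y (ltnW H)) leq_addr.
  - have Hh : has (fun z => (y <= z) && (z < x)) s.
      by apply/hasP; exists y => //; rewrite leqnn H.
    by rewrite leqNgt (@count_lt_split s y x (ltnW H)) -addn1 leq_add2l -has_count Hh.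
  - by rewrite H eqxx in xy.
by rewrite -cats1 count_cat /= ltnn !addn0.
Qed.

Definition codeseq (s : seq nat) : seq nat :=
  mkseq (fun i => count (fun z => z < nth 0 s i) (take i s)) (size s).

Lemma codeseq_rcons s x :
  codeseq (rcons s x) = rcons (codeseq s) (count (fun z => z < x) s).
Proof.
rewrite /codeseq size_rcons mkseqS nth_rcons ltnn eqxx -[rcons s x]cats1 take_size_cat //.
congr rcons; rewrite /mkseq; apply/eq_in_map => i; rewrite mem_iota add0n => /andP [_ Hi].
by rewrite nth_cat Hi takel_cat // ltnW.
Qed.

Lemma decode_codeseq s : uniq s -> decode (codeseq s) = relpat s.
Proof.
elim/last_ind: s => [|s x IH] // Hu.
rewrite rcons_uniq in Hu; case/andP: Hu => Hx Hu.
by rewrite codeseq_rcons decode_rcons IH // relpat_rcons.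
Qed.

Lemma take_codeseq k s : take k (codeseq s) = codeseq (take k s).
Proof.
rewrite /codeseq /mkseq -map_take take_iota size_take_min.
apply/eq_in_map => i; rewrite mem_iota add0n => /andP [_ Hi].
rewrite leq_min in Hi; case/andP: Hi => Hik _.
by rewrite nth_take // take_takel // ltnW.
Qed.

Lemma okt_mkseq f l k : (forall i, i < l -> f i <= k + i) -> okt k (mkseq f l).
Proof.
elim: l f k => [|l IH] f k H //.
rewrite /mkseq -add1n iotaD /=.
rewrite -[k]addn0 H // addn0 /= -[iota (0 + 1) l]/(iota (1 + 0) l) iotaDl -map_comp.
apply: (IH (f \o addn 1)) => i Hi /=; apply: leq_trans (H (1 + i) _) _; lia.
Qed.

Lemma okt_codeseq s : okt 0 (codeseq s).
Proof.
apply: okt_mkseq => i Hi; rewrite add0n.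
apply: leq_trans (count_size _ _) _; rewrite size_take_min; exact: geq_minl.
Qed.

Lemma size_codeseq s : size (codeseq s) = size s.
Proof. by rewrite size_mkseq. Qed.

Section Perm.
Variable n : nat.

Lemma size_qualities (p : 'S_n) : size (qualities p) = n.
Proof. by rewrite size_map size_enum_ord. Qed.

Lemma uniq_qualities (p : 'S_n) : uniq (qualities p).
Proof.
rewrite /qualities map_inj_uniq ?enum_uniq // => i j /val_inj; exact: perm_inj.
Qed.

Lemma perm_qualities (p : 'S_n) : perm_eq (qualities p) (iota 0 n).
Proof.
apply: uniq_perm; [exact: uniq_qualities | exact: iota_uniq |] => x.
rewrite mem_iota add0n /=; apply/mapP/idP.
  by move=> [j _ ->].
move=> Hx; exists ((p^-1)%g (Ordinal Hx)); first by rewrite mem_enum.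
by rewrite permKV.
Qed.

Lemma relpat_qualities (p : 'S_n) : relpat (qualities p) = qualities p.
Proof.
rewrite /relpat -[RHS]map_id; apply/eq_in_map => x Hx.
have Hx' : x \in iota 0 n by rewrite -(perm_mem (perm_qualities p)).
rewrite mem_iota add0n in Hx'.
move/seq.permP: (perm_qualities p) => ->.
by rewrite -size_filter (filter_iota_ltn 0 (ltnW Hx')) size_iota.
Qed.

Definition code (p : 'S_n) := codeseq (qualities p).

Lemma decode_code (p : 'S_n) : decode (code p) = qualities p.
Proof. by rewrite /code decode_codeseq ?uniq_qualities // relpat_qualities. Qed.

Lemma code_inj : injective code.
Proof.
move=> p1 p2 H.
have Hq : qualities p1 = qualities p2 by rewrite -!decode_code H.
move/eq_in_map: Hq => Hq.
apply/permP => i; apply/val_inj; apply: Hq.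
by rewrite /= mem_enum.
Qed.


Lemma code_in (p : 'S_n) : code p \in codes 0 n.
Proof. by rewrite mem_codes /code size_codeseq size_qualities eqxx okt_codeseq. Qed.

Lemma perm_codes : perm_eq [seq code p | p <- enum 'S_n] (codes 0 n).
Proof.
have Hu : uniq [seq code p | p <- enum 'S_n] by rewrite map_inj_uniq ?enum_uniq //; exact: code_inj.
apply: uniq_perm => //; first exact: uniq_codes.
apply: (uniq_min_size Hu (s2 := codes 0 n) _ _).2.
  by move=> c /mapP [p _ ->]; exact: code_in.
have := size_codes n 0; rewrite fact0 muln1 add0n => ->.
by rewrite size_map -cardE card_Sn.
Qed.

Lemma stop_index_code (S : strategy) (p : 'S_n) :
  stop_index S p = find (fun i => S (decode (take i.+1 (code p)))) (iota 0 n).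
Proof.
rewrite /stop_index; apply: eq_in_find => i; rewrite mem_iota add0n => /andP [_ Hi].
rewrite /code take_codeseq decode_codeseq //.
exact: take_uniq (uniq_qualities p).
Qed.

End Perm.

Definition evol (v : nat) (t : seq nat) : nat := foldl (fun v c => v + (c <= v)) v t.

Lemma nth_foldl_ext pat t j : j < size pat -> nth 0 (foldl ext pat t) j = evol (nth 0 pat j) t.
Proof.
elim: t pat => [|c t IH] pat Hj //=.
rewrite IH; last by rewrite size_ext ltnW // ltnS ltnW.
by rewrite /ext nth_rcons size_map Hj (nth_map 0).
Qed.

Lemma nth_decode_cat h c t : nth 0 (decode (h ++ c :: t)) (size h) = evol c t.
Proof.
rewrite /decode foldl_cat /= nth_foldl_ext; last by rewrite size_ext size_foldl_ext.
by rewrite /ext nth_rcons size_map size_foldl_ext ltnn eqxx.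
Qed.

Section Game.
Variables (R : realFieldType) (m M : R).
Local Open Scope ring_scope.

Definition reward (k x : nat) (t : seq nat) : R :=
  let v := evol x t in if v == (k + size t).-1 then M else if v == 0%N then m else 0.

Fixpoint play (T : strategy) (h t : seq nat) : R :=
  match t with
  | [::] => 0
  | c :: t' => if T (rcons h c) then reward (size h).+1 c t' else play T (rcons h c) t'
  end.

Definition rew (cs : seq nat) (j : nat) : R :=
  let v := nth 0%N (decode cs) j in
  if v == (size cs).-1 then M else if v == 0%N then m else 0.

Lemma play_find T t h : play T h t =
  let i := find (fun j => T (take j.+1 (h ++ t))) (iota (size h) (size t)) in
  if (i < size t)%N then rew (h ++ t) (size h + i) else 0.
Proof.
elim: t h => [|c t IH] h //=.
have Htk : take (size h).+1 (h ++ c :: t) = rcons h c.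
  by rewrite -cat_rcons take_size_cat // size_rcons.
rewrite Htk; case: (T (rcons h c)) => /=.
  by rewrite addn0 /rew /reward nth_decode_cat size_cat /= addnS.
rewrite IH /= size_rcons cat_rcons ltnS addSnnS. by [].
Qed.

Lemma payoff_play n (S : strategy) (p : 'S_n) :
  payoff m M S p = play (fun cs => S (decode cs)) [::] (code p).
Proof.
rewrite play_find /payoff stop_index_code /= /code size_codeseq size_qualities.
case: ifP => // _.
by rewrite /rew -/(code p) decode_code add0n /code size_codeseq size_qualities.
Qed.

End Game.

Ltac natfold := repeat (rewrite -natrD || rewrite nat1r || rewrite natr1).
Ltac nzfield := field; natfold; rewrite ?pnatr_eq0; lia.

Section Value.
Variables (R : realFieldType) (m M : R).
Local Open Scope ring_scope.

Definition av (k x l : nat) : R :=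
  (((x == k.-1)%:R * M + ((x == 0%N) && ~~((k == 1%N) && (l == 0%N)))%:R * m)
   * (k%:R / (k + l)%:R)).

Lemma reward_cons k x c t :
  reward m M k x (c :: t) = reward m M k.+1 (x + (c <= x)) t.
Proof. by rewrite /reward /= addnS. Qed.

Lemma sum_split_le (F : bool -> R) k x : (x <= k)%N ->
  \sum_(c <- iota 0 k.+1) F (c <= x)%N = x.+1%:R * F true + (k - x)%:R * F false.
Proof.
move=> Hx.
have -> : k.+1 = (x.+1 + (k - x))%N by lia.
rewrite iotaD big_cat /= add0n.
have E1 : \sum_(c <- iota 0 x.+1) F (c <= x)%N = \sum_(c <- iota 0 x.+1) F true.
  by rewrite big_seq_cond [RHS]big_seq_cond; apply: eq_bigr => c /andP [];
     rewrite mem_iota add0n ltnS => /andP [_ ->].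
have E2 : \sum_(c <- iota x.+1 (k - x)) F (c <= x)%N = \sum_(c <- iota x.+1 (k - x)) F false.
  rewrite big_seq_cond [RHS]big_seq_cond; apply: eq_bigr => c /andP [].
  by rewrite mem_iota => /andP [H1 _] _; rewrite leqNgt H1.
rewrite E1 E2 !big_const_seq !count_predT !size_iota.
by rewrite !iter_addr !addr0 !mulr_natl.
Qed.

Lemma av_rec k x l : (0 < k)%N -> (x < k)%N ->
  x.+1%:R * av k.+1 x.+1 l + (k - x)%:R * av k.+1 x l = k.+1%:R * av k x l.+1.
Proof.
case: k => [//|k] _ Hx; rewrite /av /=.
have -> : (x == k.+1) = false by apply/negbTE; rewrite neq_ltn Hx.
rewrite !eqSS /= !andbT.
have -> : ((k.+2 + l)%:R : R) = (k.+1 + l.+1)%:R by rewrite addSnnS.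
have Hd : ((k.+1 + l.+1)%:R : R) != 0 by rewrite pnatr_eq0 addnS.
have E : (l.+1 == 0%N) = false by [].
have T1 : (true%:R : R) = 1 by [].
have F0 : (false%:R : R) = 0 by [].
rewrite E andbF /= andbT F0.
case: (x =P k) => [->|Hxk].
  rewrite T1 subSnn.
  case: k Hx Hd => [|k] _ Hd.
    rewrite eqxx T1.
    by nzfield.
  have -> : (k.+1 == 0%N) = false by [].
  rewrite F0.
  by nzfield.

rewrite F0.
case: (x =P 0%N) => [->|Hx0].
  rewrite T1 subn0.
  by nzfield.
rewrite F0 !mul0r !add0r !mul0r !mulr0 addr0. done.
Qed.

Lemma sum_codesS k l (F : seq nat -> R) :
  \sum_(t <- codes k l.+1) F t = \sum_(c <- iota 0 k.+1) \sum_(t <- codes k.+1 l) F (c :: t).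
Proof. by rewrite codesS big_allpairs_dep. Qed.

Lemma size_codesS k l : size (codes k l.+1) = (k.+1 * size (codes k.+1 l))%N.
Proof. by rewrite codesS size_allpairs size_iota. Qed.

Lemma sum_reward l k x : (0 < k)%N -> (x < k)%N ->
  \sum_(t <- codes k l) reward m M k x t = (size (codes k l))%:R * av k x l.
Proof.
elim: l k x => [|l IH] k x Hk Hx.
  rewrite /= big_seq1 mul1r /reward /= /av addn0 divff ?pnatr_eq0 -?lt0n // mulr1.
  case: (x =P k.-1) => [->|Hxk] /=.
    case: k Hk Hx => [//|[|k]] _ _; rewrite ?eqxx /= ?mul1r ?mul0r ?addr0 //.
  case: (x =P 0%N) => [Hx0|H0] /=.
    have k1 : (k == 1%N) = false by apply/eqP => E; apply: Hxk; rewrite Hx0 E.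
    by rewrite k1 /= mul0r add0r mul1r.
  by rewrite mul0r mul0r addr0.
rewrite sum_codesS.
under eq_bigr => c _ do under eq_bigr => t _ do rewrite reward_cons.
have -> : \sum_(c <- iota 0 k.+1) \sum_(t <- codes k.+1 l) reward m M k.+1 (x + (c <= x)%N) t
  = \sum_(c <- iota 0 k.+1) (fun b : bool => (size (codes k.+1 l))%:R * av k.+1 (x + b) l) (c <= x)%N.
  apply: eq_bigr => c _; apply: IH => //; case: (c <= x)%N; lia.
rewrite (@sum_split_le (fun b : bool => (size (codes k.+1 l))%:R * av k.+1 (x + b) l) k x); last exact: ltnW.
rewrite /= addn1 addn0 size_codesS natrM [RHS]mulrAC -av_rec //.
ring.
Qed.

Fixpoint wv (k l : nat) : R :=
  match l with
  | 0 => 0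
  | l'.+1 => (\sum_(x <- iota 0 k.+1) Num.max (av k.+1 x l') (wv k.+1 l')) / k.+1%:R
  end.

Lemma sum_play_cons T h c (ts : seq (seq nat)) :
  \sum_(t <- ts) play m M T h (c :: t) =
  if T (rcons h c) then \sum_(t <- ts) reward m M (size h).+1 c t
  else \sum_(t <- ts) play m M T (rcons h c) t.
Proof. by case: ifP => HT; apply: eq_bigr => t _ /=; rewrite HT. Qed.

Lemma wvS k l : wv k l.+1 =
  (\sum_(x <- iota 0 k.+1) Num.max (av k.+1 x l) (wv k.+1 l)) / k.+1%:R.
Proof. by []. Qed.

Lemma play_le (T : strategy) l k h : size h = k ->
  \sum_(t <- codes k l) play m M T h t <= (size (codes k l))%:R * wv k l.
Proof.
elim: l k h => [|l IH] k h Hh.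
  by rewrite /= big_seq1 mulr0.
rewrite sum_codesS size_codesS natrM wvS.
set S := (size (codes k.+1 l))%:R.
set Sm := \sum_(x <- iota 0 k.+1) Num.max (av _ x _) _.
have -> : k.+1%:R * S * (Sm / k.+1%:R) = S * Sm.
  by field; natfold; rewrite ?pnatr_eq0.
rewrite /Sm mulr_sumr big_seq [X in _ <= X]big_seq; apply: ler_sum => c Hc.
rewrite mem_iota add0n /= in Hc.
rewrite sum_play_cons Hh.
case: (T (rcons h c)).
  rewrite sum_reward //.
  by rewrite ler_wpM2l // le_max lexx.
apply: le_trans (IH _ _ _) _; first by rewrite size_rcons Hh.
by rewrite ler_wpM2l // le_max lexx orbT.
Qed.

End Value.

Section Opt.
Variables (R : realFieldType) (m M : R).
Local Open Scope ring_scope.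

Lemma play_eq (T : strategy) (thr : nat -> nat -> bool) n :
  (forall h c, T (rcons h c) = thr (size h).+1 c) ->
  (forall j y, (0 < j <= n)%N -> (y < j)%N ->
      (thr j y -> wv m M j (n - j) <= av m M j y (n - j)) /\
      (~~ thr j y -> av m M j y (n - j) <= wv m M j (n - j))) ->
  forall l k h, size h = k -> (k + l = n)%N ->
  \sum_(t <- codes k l) play m M T h t = (size (codes k l))%:R * wv m M k l.
Proof.
move=> HT G; elim=> [|l IH] k h Hh Hn.
  by rewrite /= big_seq1 mulr0.
rewrite sum_codesS size_codesS natrM wvS.
set S := (size (codes k.+1 l))%:R.
set Sm := \sum_(x <- iota 0 k.+1) Num.max (av _ _ _ x _) _.
have -> : k.+1%:R * S * (Sm / k.+1%:R) = S * Sm.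
  by field; natfold; rewrite ?pnatr_eq0.
rewrite /Sm mulr_sumr big_seq [RHS]big_seq; apply: eq_bigr => c Hc.
rewrite mem_iota add0n /= in Hc.
have Hl : (n - k.+1)%N = l by lia.
have [G1 G2] := G k.+1 c ltac:(lia) Hc; rewrite Hl in G1 G2.
rewrite sum_play_cons Hh HT Hh.
case E: (thr k.+1 c).
  by rewrite sum_reward // max_l // G1.
rewrite (IH k.+1) ?size_rcons ?Hh //; last by lia.
by rewrite max_r // G2 // E.
Qed.

Lemma wv_ge0 l k : 0 <= wv m M k l.
Proof.
elim: l k => [|l IH] k //=.
apply: divr_ge0 => //; apply: sumr_ge0 => x _.
by rewrite le_max IH orbT.
Qed.

Lemma wv_step l k : wv m M k.+1 l <= wv m M k l.+1.
Proof.
rewrite wvS ler_pdivlMr ?ltr0Sn //.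
have -> : wv m M k.+1 l * k.+1%:R = \sum_(x <- iota 0 k.+1) wv m M k.+1 l.
  by rewrite big_const_seq count_predT size_iota iter_addr addr0 mulr_natr.
by apply: ler_sum => x _; rewrite le_max lexx orbT.
Qed.

Lemma wv_mono n j k : (j <= k <= n)%N -> wv m M k (n - k) <= wv m M j (n - j).
Proof.
move=> /andP [Hjk Hkn].
have [d Hd] : exists d, k = (j + d)%N by exists (k - j)%N; lia.
subst k.
elim: d Hjk Hkn => [|d IH] Hjk Hkn; first by rewrite addn0.
apply: le_trans (IH _ _) ; [|lia|lia].
have -> : (n - (j + d))%N = (n - (j + d.+1)).+1 by lia.
by rewrite addnS wv_step.
Qed.

End Opt.

Section Thr.
Variables (R : realFieldType) (m M : R) (n : nat).
Local Open Scope ring_scope.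
Hypotheses (m0 : 0 <= m) (mM : m < M).

Lemma M0 : 0 <= M. Proof. exact: le_trans m0 (ltW mM). Qed.

Lemma av_best j l : (1 < j)%N -> av m M j j.-1 l = M * (j%:R / (j + l)%:R).
Proof.
case: j => [|[|j]] // _; rewrite /av eqxx /=.
by rewrite mul1r mul0r addr0.
Qed.

Lemma av_worst j l : (1 < j)%N -> av m M j 0 l = m * (j%:R / (j + l)%:R).
Proof.
case: j => [|[|j]] // _; rewrite /av /=.
by rewrite mul0r add0r mul1r.
Qed.

Lemma av_mid j y l : (0 < y)%N -> y != j.-1 -> av m M j y l = 0.
Proof.
move=> Hy Hyj; rewrite /av (negbTE Hyj).
have -> : (y == 0%N) = false by apply/negbTE; rewrite -lt0n.
by rewrite /= mul0r mul0r addr0 mul0r.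
Qed.

Lemma av_one l : av m M 1 0 l.+1 = (M + m) * (1 / (1 + l.+1)%:R).
Proof. by rewrite /av /= !mul1r. Qed.

Lemma av_one0 : av m M 1 0 0 = M.
Proof. by rewrite /av /= mul1r mul0r addr0 addn0 divr1 mulr1. Qed.

Lemma wv_one l : av m M 1 0 l.+1 <= wv m M 1 l.+1.
Proof.
rewrite wvS /= big_cons big_cons big_nil addr0 av_one.
apply: le_trans (_ : (av m M 2 0 l + av m M 2 1 l) / 2%:R <= _).
  rewrite (av_worst l (isT : (1 < 2)%N)) (av_best l (isT : (1 < 2)%N)).
  rewrite le_eqVlt; apply/orP; left; apply/eqP.
  by field; natfold; rewrite pnatr_eq0.
rewrite ler_pM2r ?invr_gt0 ?ltr0Sn //.
by apply: lerD; rewrite le_max lexx.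
Qed.

Definition thrI (c : R) : nat :=
  find (fun j => wv m M j.+1 (n - j.+1) <= c * (j.+1%:R / n%:R)) (iota 0 n).

Lemma thrI_lt c j : (0 < j <= n)%N -> (j <= thrI c)%N ->
  c * (j%:R / n%:R) < wv m M j (n - j).
Proof.
move=> /andP [Hj Hjn] Hr.
have Hlt : (j.-1 < thrI c)%N by lia.
have := @before_find nat 0 (fun j => wv m M j.+1 (n - j.+1) <= c * (j.+1%:R / n%:R)) (iota 0 n) j.-1 Hlt.
rewrite nth_iota /=; last by lia.
by rewrite add0n prednK // => /negbT; rewrite -ltNge.
Qed.

Lemma thrI_ge c j : 0 <= c -> (0 < j <= n)%N -> (thrI c < j)%N ->
  wv m M j (n - j) <= c * (j%:R / n%:R).
Proof.
move=> c0 /andP [Hj Hjn] Hr.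
have Hs : (thrI c < size (iota 0 n))%N by rewrite size_iota; lia.
have Hh : has (fun j => wv m M j.+1 (n - j.+1) <= c * (j.+1%:R / n%:R)) (iota 0 n)
  by rewrite has_find.
have := nth_find 0 Hh; rewrite -/(thrI c) nth_iota; last by lia.
rewrite add0n => H.
apply: le_trans (wv_mono (j := (thrI c).+1) (k := j) m M (n := n) _) _; first by lia.
apply: le_trans H _.
rewrite ler_wpM2l // ler_wpM2r ?invr_ge0 ?ler0n // ler_nat; lia.
Qed.

Lemma thrI_mono : (thrI M <= thrI m)%N.
Proof.
apply: sub_find => j /= H; apply: le_trans H _.
apply: ler_wpM2r; [by rewrite divr_ge0 ?ler0n | exact: ltW].
Qed.

Lemma thrI_le c : (thrI c <= n)%N.
Proof. by rewrite /thrI -[X in (_ <= X)%N](size_iota 0 n) find_size. Qed.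

End Thr.

Definition thr (r s j y : nat) : bool :=
  ((r < j <= s) && (y == j.-1)) || ((s < j) && ((y == j.-1) || (y == 0))).

Section Good.
Variables (R : realFieldType) (m M : R) (n : nat).
Local Open Scope ring_scope.
Hypotheses (m0 : 0 <= m) (mM : m < M).

Lemma good j y : (0 < j <= n)%N -> (y < j)%N ->
  let r := thrI m M n M in let s := thrI m M n m in
  (thr r s j y -> wv m M j (n - j) <= av m M j y (n - j)) /\
  (~~ thr r s j y -> av m M j y (n - j) <= wv m M j (n - j)).
Proof.
move=> Hj Hy r s.
have rs : (r <= s)%N by exact: thrI_mono.
have M0' : 0 <= M := M0 m0 mM.
have Hn : (j + (n - j))%N = n by lia.
case: (j =P 1%N) => [Ej|Ej].
  subst j; have -> : y = 0%N by lia.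
  have -> : thr r s 1 0 = (r == 0%N) by rewrite /thr; case: r rs => [|r]; case: s => [|s] //=; lia.
  case: (r =P 0%N) => [Er|Er]; split => // _.
    have := thrI_ge m0 mM (c := M) (j := 1) M0' Hj ltac:(rewrite -/r; lia).
    move=> H; apply: le_trans H _.
    case E: (n - 1)%N => [|l].
      have -> : n = 1%N by lia.
      by rewrite av_one0 divr1 mulr1.
    rewrite av_one -E Hn mulrDl lerDl mulr_ge0 // divr_ge0 ?ler0n //.
  have H := thrI_lt m0 mM (c := M) (j := 1) Hj ltac:(rewrite -/r; lia).
  case E: (n - 1)%N => [|l].
    have En : n = 1%N by lia.
    by move: H; rewrite av_one0 En divr1 mulr1 => /ltW.
  exact: wv_one.
have j2 : (1 < j)%N by lia.
case: (y =P j.-1) => [Ey|Ey].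
  subst y; rewrite av_best // Hn.
  have -> : thr r s j j.-1 = (r < j)%N by rewrite /thr eqxx /= !andbT; apply/idP/idP; lia.
  split => H.
    by apply: (thrI_ge m0 mM M0' Hj); rewrite -/r.
  by apply/ltW/(thrI_lt m0 mM Hj); rewrite -/r -/s; lia.
case: (y =P 0%N) => [Ey0|Ey0].
  subst y; rewrite av_worst // Hn.
  have -> : thr r s j 0 = (s < j)%N.
    have E0 : (0 == j.-1) = false by apply/negbTE/eqP.
    by rewrite /thr E0 eqxx /= andbF /= andbT.
  split => H.
    by apply: (thrI_ge m0 mM m0 Hj); rewrite -/s.
  by apply/ltW/(thrI_lt m0 mM Hj); rewrite -/r -/s; lia.
rewrite av_mid; [|lia|by apply/eqP].
have -> : thr r s j y = false.
  have E1 : (y == j.-1) = false by apply/negbTE/eqP.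
  have E2 : (y == 0%N) = false by apply/negbTE/eqP.
  by rewrite /thr E1 E2 !andbF.
by split => // _; exact: wv_ge0.
Qed.

End Good.
Local Open Scope ring_scope.

Lemma sum_payoff (R : realFieldType) (m M : R) n (S : strategy) :
  \sum_(p : 'S_n) payoff m M S p =
  \sum_(cs <- codes 0 n) play m M (fun cs => S (decode cs)) [::] cs.
Proof.
under eq_bigr => p _ do rewrite payoff_play.
by rewrite -(perm_big _ (perm_codes n)) big_map big_enum.
Qed.

Lemma thr_decode r s h c :
  threshold_strategy r s (decode (rcons h c)) = thr r s (size h).+1 c.
Proof.
by rewrite /threshold_strategy decode_rcons /ext last_rcons size_rcons size_map size_decode.
Qed.

Unset Implicit Arguments.
Theorem theorem5 (R : realFieldType) (n : nat) (m M : R) :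
  0 <= m -> m < M ->
  exists r s : nat, (r <= s <= n)%N /\
    forall S : strategy,
      expected_payoff m M n S <= expected_payoff m M n (threshold_strategy r s).
Proof.
move=> m0 mM.
exists (thrI m M n M), (thrI m M n m); split.
  by rewrite thrI_mono // thrI_le.
move=> S.
rewrite /expected_payoff ler_wpM2r ?invr_ge0 ?ler0n // !sum_payoff.
apply: le_trans (play_le m M _ n (k := 0) (h := [::]) (erefl 0%N)) _.
rewrite (play_eq (thr := thr (thrI m M n M) (thrI m M n m)) (n := n) _ _ (k := 0) (h := [::]) (erefl 0%N)) //.
  by move=> h c; rewrite thr_decode.
by move=> j y Hj Hy; exact: good.
Qed.
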